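(* Let $T>0$, let $u:\mathbb{R}\times[0,T]\to\mathbb{R}$ be a bounded continuous function solving the Hunter–Saxton equation in the weak sense, and let $\{x_\alpha\}_{\alpha\in A}$ be a family of characteristics associated to $u$ on $[0,T]$ such that $y(t):=\sup_{\alpha}x_\alpha(t)$ is finite for $t\in[0,T]$. Then $y$ is also a characteristic associated to $u$ on $[0,T]$. The same holds for $\inf_\alpha x_\alpha(t)$ (when finite).
   Context: The Hunter–Saxton equation is $\partial_t u+\partial_x\big[\tfrac12 u^2\big]=\tfrac12\int_{-\infty}^x w^2(y,t)\,dy$, $w=\partial_x u$. A weak solution on $[0,T]$ is a continuous function $u$ such that for each $t$, $u(\cdot,t)$ is absolutely continuous on $\mathbb{R}$ with $\partial_x u=w\in L^\infty([0,T];L^2(\mathbb{R}))$, the map $t\mapsto u(\cdot,t)\in L^2_{loc}(\mathbb{R})$ is absolutely continuous, and the equation holds in the sense of distributions. A characteristic associated to $u$ on $[0,T]$ is a Lipschitz continuous ($C^1$) function $x:[0,T]\to\mathbb{R}$ with $\dot x(t)=u(x(t),t)$ for a.e. $t\in[0,T]$. *)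

(* Defs.v *)
From HB Require Import structures.
From mathcomp Require Import all_boot all_order all_algebra.
From mathcomp Require Import all_classical all_reals all_analysis.
Set Implicit Arguments. Unset Strict Implicit. Unset Printing Implicit Defensive.
Import Order.TTheory GRing.Theory Num.Theory.
Import numFieldNormedType.Exports.
Local Open Scope classical_set_scope.
Local Open Scope ring_scope.

(* Functions of (x,t) are curried: u x t. *)
Section HS.
Variable R : realType.
Local Notation mu := (@lebesgue_measure R).

Definition abs_cont_on (a b : R) (f : R -> R) : Prop :=
  forall e : R, 0 < e -> exists2 d : R, 0 < d &
    forall (n : nat) (s t : 'I_n -> R),
      (forall i, a <= s i /\ s i <= t i /\ t i <= b) ->
      (forall i j, i != j -> t i <= s j \/ t j <= s i) ->
      \sum_(i < n) (t i - s i) < d ->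
      \sum_(i < n) `|f (t i) - f (s i)| < e.

Definition abs_cont_R (f : R -> R) : Prop := forall a b, abs_cont_on a b f.

Definition L2dist (a b : R) (f g : R -> R) : R :=
  Num.sqrt (fine (\int[mu]_(x in `[a, b]) ((f x - g x) ^+ 2)%:E)%E).

(* t |-> u(.,t) in L^2_loc(R) is absolutely continuous on [0,T]:
   for every compact [a,b], t |-> u(.,t)|_[a,b] in L^2([a,b]) is
   absolutely continuous. *)
Definition abs_cont_L2loc (T : R) (u : R -> R -> R) : Prop :=
  forall a b : R,
  forall e : R, 0 < e -> exists2 d : R, 0 < d &
    forall (n : nat) (s t : 'I_n -> R),
      (forall i, 0 <= s i /\ s i <= t i /\ t i <= T) ->
      (forall i j, i != j -> t i <= s j \/ t j <= s i) ->
      \sum_(i < n) (t i - s i) < d ->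
      \sum_(i < n) L2dist a b (fun x => u x (t i)) (fun x => u x (s i)) < e.

Definition dx (phi : R -> R -> R) : R -> R -> R :=
  fun x t => derive1 (fun y => phi y t) x.
Definition dt (phi : R -> R -> R) : R -> R -> R :=
  fun x t => derive1 (phi x) t.

Fixpoint Ck (k : nat) (phi : R -> R -> R) : Prop :=
  continuous (fun p : R * R => phi p.1 p.2) /\
  match k with
  | 0 => True
  | k'.+1 => (forall x t, derivable (fun y => phi y t) x 1 /\
                          derivable (phi x) t 1) /\
             Ck k' (dx phi) /\ Ck k' (dt phi)
  end.

Definition test_fun (T : R) (phi : R -> R -> R) : Prop :=
  (forall k, Ck k phi) /\
  exists a b t0 t1 : R, 0 < t0 /\ t1 < T /\
    forall x t, ~ (a <= x <= b /\ t0 <= t <= t1) -> phi x t = 0.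

Definition HS_source (w : R -> R -> R) (x t : R) : R :=
  2^-1 * fine (\int[mu]_(y in `]-oo, x]) ((w y t) ^+ 2)%:E)%E.

Definition HS_weak_solution (T : R) (u : R -> R -> R) : Prop :=
  {within [set p : R * R | 0 <= p.2 <= T],
     continuous (fun p : R * R => u p.1 p.2)} /\
  exists w : R -> R -> R,
    (forall t, 0 <= t <= T ->
       abs_cont_R (fun x => u x t) /\
       measurable_fun setT (fun y => w y t) /\
       {ae mu, forall x, derivable (fun y => u y t) x 1 /\
                         derive1 (fun y => u y t) x = w x t}) /\
    (* w in L^infty([0,T]; L^2(R)) *)
    measurable_fun setT (fun p : R * R => w p.1 p.2) /\
    (forall t, 0 <= t <= T ->
       (\int[mu]_(y in setT) ((w y t) ^+ 2)%:E < +oo)%E) /\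
    (exists C : R, {ae mu, forall t, 0 <= t <= T ->
       (\int[mu]_(y in setT) ((w y t) ^+ 2)%:E <= C%:E)%E}) /\
    abs_cont_L2loc T u /\
    (forall phi, test_fun T phi ->
       (\int[mu]_(t in `[0%R, T]) \int[mu]_(x in setT)
          (u x t * dt phi x t + 2^-1 * (u x t) ^+ 2 * dx phi x t
           + HS_source w x t * phi x t)%:E = 0)%E).

Definition characteristic (T : R) (u : R -> R -> R) (x : R -> R) : Prop :=
  (exists L : R, forall s t, 0 <= s <= T -> 0 <= t <= T ->
     `|x s - x t| <= L * `|s - t|) /\
  {ae mu, forall t, 0 <= t <= T ->
     derivable x t 1 /\ derive1 x t = u (x t) t}.

End HS.

(* Main.v *)
Require Import Defs.
From HB Require Import structures.
From mathcomp Require Import all_boot all_order all_algebra.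
From mathcomp Require Import all_classical all_reals all_analysis.
From mathcomp Require Import ring lra.
From mathcomp Require Import measurable_realfun.
Import Order.TTheory GRing.Theory Num.Theory.
Import numFieldNormedType.Exports.
Local Open Scope classical_set_scope.
Local Open Scope ring_scope.
Lemma cont_ed (R: realType) (T:R) (u : R->R->R):
 {within [set p : R*R | 0 <= p.2 <= T], continuous (fun p : R * R => u p.1 p.2)} ->
 forall x0 t0, 0 <= t0 <= T -> forall e, 0<e -> exists2 d, 0<d & forall x t, 0<=t<=T -> `|x - x0| < d -> `|t - t0| < d -> `|u x t - u x0 t0| < e.
Proof.
move=> hc x0 t0 ht e e0.
have := hc (x0,t0).
move/cvgrPdist_lt => /(_ e e0) H.
have H2 : within [set p : R*R | 0 <= p.2 <= T] (nbhs (x0,t0)) (fun p : R * R => `|u x0 t0 - u p.1 p.2| < e).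
  by rewrite nbhs_subspace_in.
move: H2; rewrite /within /= => /nbhs_ballP [d d0 Hd].
exists d => // x t htT hx htt.
have := Hd (x,t).
move=> H3; rewrite distrC; apply: H3 => //.
by split; rewrite /= -ball_normE /ball_ /= distrC.
Qed.
Lemma deriv_ed (R : realType) (f : R -> R) (t : R) : derivable f t 1 ->
  forall e, 0 < e -> exists2 d, 0 < d & forall r, `|r - t| < d ->
    `|f r - f t - derive1 f t * (r - t)| <= e * `|r - t|.
Proof.
move=> hd e e0.
move: hd; rewrite /derivable.
have -> : (fun h : R => h^-1 *: ((f \o shift t) h%:A - f t)) = (fun h => h^-1 *: (f (h + t) - f t)).
  by apply: funext => h; rewrite /= /shift /= -[h%:A]/(h * 1) mulr1.
rewrite -/(derive1 f t).
move/cvgrPdist_lt => /(_ e e0).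
move=> /= H.
move: H; rewrite /dnbhs /within /= => /nbhs_ballP [d d0 Hd].
exists d => // r hr.
have [->|hne] := eqVneq r t.
  by rewrite !subrr !(mulr0, subr0, normr0).
have hh : r - t != 0 by rewrite subr_eq0.
have := Hd (r - t).
rewrite -ball_normE /ball_ /= sub0r normrN => /(_ hr hh).
rewrite subrK.
move=> H.
have hp : 0 < `|r - t| by rewrite normr_gt0.
rewrite -(@ler_pM2r _ (`|r - t|^-1)) ?invr_gt0 // mulrK ?unitfE ?normr_eq0 //.
rewrite -normfV -normrM.
apply: ltW.
suff -> : (f r - f t - f^`()%classic t * (r - t)) / (r - t) = - (f^`()%classic t - (r - t)^-1 *: (f r - f t)) by rewrite normrN.
rewrite /GRing.scale /=. by field.
Qed.
Lemma K_core (R : realType) (a b : R) (f phi : R -> R) (L K e : R) (U : set R) :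
  a <= b -> 0 < e -> open U ->
  (forall s t, a <= s <= b -> a <= t <= b -> `|f s - f t| <= L * `|s - t|) ->
  (forall t s, a <= t -> t <= s -> s <= b -> 0 <= phi s - phi t <= s - t) ->
  (forall t s, a <= t -> t <= s -> s <= b -> (forall x, t < x <= s -> U x) ->
     phi s - phi t = s - t) ->
  (forall t, a <= t < b -> ~ U t -> exists2 d, 0 < d &
     forall r, t < r < t + d -> f r - f t <= (K + e) * (r - t)) ->
  f b - f a <= (K + e) * (b - a) + (`|L| + `|K|) * (phi b - phi a).
Proof.
move=> hab he oU hL hphi hphiU hd.
set C := `|L| + `|K|.
have C0 : 0 <= C by rewrite addr_ge0.
pose g t := f t - f a - (K + e) * (t - a) - C * (phi t - phi a).
set Lg := `|L| + `|K + e| + C.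
have Lg0 : 0 <= Lg by rewrite !addr_ge0.
have gL : forall r s, a <= r -> r <= s -> s <= b -> g s - g r <= Lg * (s - r).
  move=> r s har hrs hsb.
  have h1 := hL s r.
  have h2 : `|s - r| = s - r by rewrite ger0_norm // subr_ge0.
  rewrite h2 in h1.
  have /andP[h3 h4] := hphi r s har hrs hsb.
  have h5 := ler_norm (f s - f r).
  have h6 : L * (s - r) <= `|L| * (s - r) by rewrite ler_wpM2r ?subr_ge0 ?ler_norm.
  have h7 : - ((K + e) * (s - r)) <= `|K + e| * (s - r).
    by rewrite -mulNr ler_wpM2r ?subr_ge0 // -normrN ler_norm.
  have h8 : C * (phi s - phi r) >= 0 by rewrite mulr_ge0.
  have h9 : C * (phi s - phi r) <= C * (s - r) by rewrite ler_wpM2l.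
  have h10 := h1 (ltac:(lra)) (ltac:(lra)).
  rewrite /g /Lg. nra.
have ga : g a = 0 by rewrite /g !subrr mulr0 mulr0 !subr0.
pose S := [set t | a <= t <= b /\ forall r, a <= r <= t -> g r <= 0].
have Sa : S a.
  split; first by rewrite lexx hab.
  move=> r /andP[h1 h2]; have -> : r = a by apply/le_anti; rewrite h1 h2.
  by rewrite ga.
have hS : has_sup S.
  split; first by exists a.
  by exists b => t [/andP[_ ?] _].
set s := sup S.
have as_ : a <= s by apply: sup_upper_bound.
have sb : s <= b.
  apply: ge_sup; first by exists a.
  by move=> t [/andP[_ ?] _].
have clA : forall r, a <= r -> r < s -> g r <= 0.
  move=> r har hrs.
  have [t [/andP[_ _] Ht] ht] := sup_adherent (ltac:(rewrite subr_gt0; exact: hrs) : 0 < s - r) hS.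
  apply: Ht; rewrite har /=; move: ht; rewrite /s; lra.
have clB : g s <= 0.
  have [<-|asn] := eqVneq a s; first by rewrite ga.
  have ass : a < s by rewrite lt_neqAle asn as_.
  apply/ler_addgt0Pr => eta eta0; rewrite add0r.
  set r := Num.max a (s - eta / (Lg + 1)).
  have q0 : 0 < eta / (Lg + 1) by rewrite divr_gt0 // ltr_wpDl.
  have har : a <= r by rewrite le_max lexx.
  have hrs : r < s by rewrite gt_max ass /= ltrBlDr ltrDl.
  have hr2 : s - eta / (Lg + 1) <= r by rewrite le_max lexx orbT.
  have h1 := clA r har hrs.
  have h2 := gL r s har (ltW hrs) sb.
  have h3 : (Lg + 1) * (s - r) <= (Lg + 1) * (eta / (Lg + 1)).
    rewrite ler_wpM2l ?addr_ge0 //; lra.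
  rewrite [X in _ <= X]mulrC divfK in h3; last by rewrite gt_eqF // ltr_wpDl.
  have h4 : 0 <= s - r by lra.
  nra.
have sS : S s.
  split; first by rewrite as_ sb.
  move=> r /andP[h1 h2]; have [h3|h3] := ltP r s; first exact: clA.
  by have -> : r = s by apply/le_anti; rewrite h2 h3.
have sEb : s = b.
  apply/eqP; rewrite eq_le sb /=; rewrite leNgt; apply/negP => hsb.
  have [d d0 Hd] : exists2 d, 0 < d & forall r, s < r < s + d -> r <= b -> g r <= g s.
    have [Us|nUs] := pselect (U s).
      move: oU; rewrite openE => /(_ s Us) /nbhs_ballP [d d0 Hd].
      exists d => // r /andP[h1 h2] h3.
      have HU : forall x, s < x <= r -> U x.
        move=> x /andP[hx1 hx2]; apply: Hd.
        rewrite -ball_normE /ball_ /= ltr_norml; apply/andP; split; lra.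
      have e1 := hphiU s r as_ (ltW h1) h3 HU.
      have e2 := hL r s (ltac:(lra)) (ltac:(lra)).
      have e3 : `|r - s| = r - s by rewrite ger0_norm // subr_ge0 ltW.
      rewrite e3 in e2.
      have e4 := ler_norm (f r - f s).
      have e5 : L * (r - s) <= `|L| * (r - s) by rewrite ler_wpM2r ?subr_ge0 ?ler_norm // ltW.
      have e6' : - K <= `|K| by rewrite -normrN ler_norm.
      have e6 : 0 <= (`|K| + K) * (r - s) by apply: mulr_ge0; lra.
      rewrite /g /C; nra.
    have hsb' : a <= s < b by rewrite as_ hsb.
    have [d d0 Hd] := hd s hsb' nUs.
    exists d => // r hr h3.
    have e1 := Hd r hr.
    have /andP[e2 _] := hphi s r as_ (ltW (proj1 (andP hr))) h3.
    have e3 : 0 <= C * (phi r - phi s) by rewrite mulr_ge0.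
    rewrite /g; lra.
  set t' := Num.min b (s + d / 2).
  have ht1 : s < t' by rewrite lt_min hsb ltrDl divr_gt0.
  have ht2 : t' <= b by rewrite ge_min lexx.
  have ht3 : t' < s + d by rewrite gt_min ltrD2l ltr_pdivrMr // ltr_pMr // ltr1n orbT.
  have St' : S t'.
    split; first by rewrite ht2 andbT; lra.
    move=> r /andP[h1 h2]; have [h3|h3] := leP r s; first by apply: (proj2 sS); rewrite h1 h3.
    apply: le_trans (Hd r _ _) clB; last by lra.
    by rewrite h3 /=; lra.
  have := sup_upper_bound hS St'; rewrite -/s; lra.
have := (proj2 sS) b; rewrite -sEb lexx as_ => /(_ isT).
rewrite sEb /g; lra.
Qed.
Section PhiEx.
Variable R : realType.
Local Notation mu := (@lebesgue_measure R).

Lemma fin_sub (U A : set R) : measurable U -> measurable A -> (mu U < +oo)%E -> A `<=` U ->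
  mu A \is a fin_num.
Proof.
move=> mU mA hU AU; rewrite ge0_fin_numE ?measure_ge0 //.
apply: le_lt_trans hU; apply: le_measure => //; rewrite inE //.
Qed.

Lemma split_U (U : set R) (t s : R) : measurable U -> (mu U < +oo)%E -> t <= s ->
  fine (mu (U `&` `]-oo, s])) - fine (mu (U `&` `]-oo, t])) = fine (mu (U `&` `]t, s])).
Proof.
move=> mU hU hts.
have E : U `&` `]-oo, s] = (U `&` `]-oo, t]) `|` (U `&` `]t, s]).
  apply/seteqP; split => x /=.
    rewrite !in_itv /= => -[Ux hx]; have [h|h] := leP x t; first by left.
    by right; split => //; apply/andP; split.
  move=> [[Ux hx]|[Ux hx]]; split => //; move: hx; rewrite !in_itv /= => hx; [exact: le_trans hx hts|by case/andP: hx].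
have D : (U `&` `]-oo, t]) `&` (U `&` `]t, s]) = set0.
  apply/seteqP; split => x //=; rewrite !in_itv /= => -[[_ h1] [_ /andP[h2 _]]].
  by move: (lt_le_trans h2 h1); rewrite ltxx.
have m1 : measurable (U `&` `]-oo, t]) by apply: measurableI.
have m2 : measurable (U `&` `]t, s]) by apply: measurableI.
rewrite E (measureU mu m1 m2 D).
have f1 := fin_sub _ _ mU m1 hU (@subIsetl _ U _).
have f2 := fin_sub _ _ mU m2 hU (@subIsetl _ U _).
by rewrite fineD // addrAC subrr add0r.
Qed.
Lemma phi_exists (a b e : R) (N : set R) :
  measurable N -> mu N = 0%E -> 0 < e -> a <= b ->
  exists U : set R, exists phi : R -> R, [/\ open U, N `<=` U,
    (forall t s, a <= t -> t <= s -> s <= b -> 0 <= phi s - phi t <= s - t),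
    (forall t s, a <= t -> t <= s -> s <= b -> (forall x, t < x <= s -> U x) ->
       phi s - phi t = s - t)
    & phi b - phi a <= e].
Proof.
move=> mN N0 e0 hab.
have hN : (mu N < +oo)%E by rewrite N0 ltry.
have [U [oU NU hU]] := lebesgue_regularity_outer mN hN e0.
have mU : measurable U := open_measurable oU.
have mUN : measurable (U `\` N) by apply: measurableD.
have hUe : (mu U <= e%:E)%E.
  apply: le_trans (ltW hU).
  have EU : U = N `|` (U `\` N).
    apply/seteqP; split => x; first by case: (pselect (N x)) => h Ux; [left|right].
    by move=> [/NU|[]].
  have D : N `&` (U `\` N) = set0 by apply/seteqP; split => x // [? []].
  rewrite {1}EU (measureU mu mN mUN D) [X in (X + _)%E](_ : _ = 0%E) ?add0e //.
have hUf : (mu U < +oo)%E by apply: le_lt_trans hUe (ltry _).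
exists U, (fun t => fine (mu (U `&` `]-oo, t]))); split => //.
- move=> t s ht hts hs; rewrite split_U //.
  have m2 : measurable (U `&` `]t, s]) by apply: measurableI.
  have f2 := fin_sub _ _ mU m2 hUf (@subIsetl _ U _).
  apply/andP; split; first by apply: fine_ge0; exact: measure_ge0.
  have : (mu (U `&` `]t, s]) <= mu `]t, s])%E.
    by apply: le_measure; rewrite ?inE //.
  rewrite lebesgue_measure_itv /=; case: ltP => hts' /=.
    by move=> h; rewrite -lee_fin fineK.
  by move=> h; rewrite -lee_fin fineK //; apply: le_trans h _; rewrite lee_fin subr_ge0.
- move=> t s ht hts hs hsub; rewrite split_U //.
  have -> : U `&` `]t, s] = [set` `]t, s]].
    apply/seteqP; split => x; first by case.
    by move=> hx; split => //; apply: hsub; move: hx; rewrite /= in_itv.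
  rewrite lebesgue_measure_itv /=; case: ltP => hts' /=; first by [].
  by move: hts'; rewrite lee_fin => hts'; apply/eqP; rewrite eq_sym subr_eq0 eq_le hts hts'.
- rewrite split_U //.
  have m2 : measurable (U `&` `]a, b]) by apply: measurableI.
  have f2 := fin_sub _ _ mU m2 hUf (@subIsetl _ U _).
  rewrite -lee_fin fineK //; apply: le_trans hUe.
  by apply: le_measure; rewrite ?inE //; exact: subIsetl.
Qed.
End PhiEx.

Lemma K_one (R : realType) (a b K L : R) (f : R -> R) (N : set R) :
  a <= b -> measurable N -> lebesgue_measure N = 0%E ->
  (forall s t, a <= s <= b -> a <= t <= b -> `|f s - f t| <= L * `|s - t|) ->
  (forall t, a <= t < b -> ~ N t -> forall e, 0 < e -> exists2 d, 0 < d &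
     forall r, t < r < t + d -> f r - f t <= (K + e) * (r - t)) ->
  f b - f a <= K * (b - a).
Proof.
move=> hab mN N0 hL hd.
set C := `|L| + `|K|.
have C0 : 0 <= C by rewrite addr_ge0.
apply/ler_addgt0Pr => eta eta0.
set D := b - a + C + 1.
have D0 : 0 < D by rewrite /D; lra.
set e := eta / D.
have e0 : 0 < e by rewrite divr_gt0.
have eD : e * D = eta by rewrite /e divfK // gt_eqF.
have [U [phi [oU NU hphi hphiU hphib]]] := @phi_exists R a b e N mN N0 e0 hab.
have := @K_core R a b f phi L K e U hab e0 oU hL hphi hphiU.
have hd' : forall t, a <= t < b -> ~ U t -> exists2 d, 0 < d &
     forall r, t < r < t + d -> f r - f t <= (K + e) * (r - t).
  by move=> t ht nU; apply: hd => // /NU.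
move=> /(_ hd') H.
have h1 : C * (phi b - phi a) <= C * e by rewrite ler_wpM2l.
have h2 : e * (b - a) + C * e + e = eta by rewrite -eD /D; ring.
rewrite -/C in H.
nra.
Qed.

Lemma K_final (R : realType) (a b lo hi L : R) (f : R -> R) (N : set R) :
  a <= b -> measurable N -> lebesgue_measure N = 0%E ->
  (forall s t, a <= s <= b -> a <= t <= b -> `|f s - f t| <= L * `|s - t|) ->
  (forall t, a <= t < b -> ~ N t -> derivable f t 1 /\ lo <= derive1 f t <= hi) ->
  lo * (b - a) <= f b - f a <= hi * (b - a).
Proof.
move=> hab mN N0 hL hd.
apply/andP; split.
  have := @K_one R a b (- lo) L (fun x => - f x) N hab mN N0.
  have hL' : forall s t, a <= s <= b -> a <= t <= b -> `|- f s - - f t| <= L * `|s - t|.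
    by move=> s t hs ht; rewrite -opprD normrN; apply: hL.
  move=> /(_ hL') H.
  have : - f b - - f a <= - lo * (b - a).
    apply: H => t ht nN e e0.
    have [hdv /andP[hlo hhi]] := hd t ht nN.
    have [d d0 Hd] := @deriv_ed R f t hdv e e0.
    exists d => // r /andP[h1 h2].
    have hrt : `|r - t| = r - t by rewrite ger0_norm // subr_ge0 ltW.
    have h3 := Hd r (ltac:(rewrite hrt; lra)); rewrite hrt in h3.
    have h4 : - (f r - f t - derive1 f t * (r - t)) <= `|f r - f t - derive1 f t * (r - t)|.
      by rewrite -normrN ler_norm.
    have h5 : lo * (r - t) <= derive1 f t * (r - t) by rewrite ler_wpM2r // subr_ge0 ltW.
    nra.
  lra.
apply: (@K_one R a b hi L f N hab mN N0 hL) => t ht nN e e0.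
have [hdv /andP[hlo hhi]] := hd t ht nN.
have [d d0 Hd] := @deriv_ed R f t hdv e e0.
exists d => // r /andP[h1 h2].
have hrt : `|r - t| = r - t by rewrite ger0_norm // subr_ge0 ltW.
    have h3 := Hd r (ltac:(rewrite hrt; lra)); rewrite hrt in h3.
have := ler_norm (f r - f t - derive1 f t * (r - t)) => h4.
have h5 : derive1 f t * (r - t) <= hi * (r - t) by rewrite ler_wpM2r // subr_ge0 ltW.
nra.
Qed.

Lemma ae_get (R : realType) (Q : R -> Prop) : {ae (@lebesgue_measure R), forall t, Q t} ->
  exists N : set R, [/\ measurable N, lebesgue_measure N = 0%E & forall t, ~ N t -> Q t].
Proof.
move=> [N [mN N0 HN]]; exists N; split => // t nN.
by case: (pselect (Q t)) => // nQ; exfalso; apply: nN; apply: HN.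
Qed.

Lemma ae_mk (R : realType) (Q : R -> Prop) (N : set R) : measurable N -> lebesgue_measure N = 0%E ->
  (forall t, ~ N t -> Q t) -> {ae (@lebesgue_measure R), forall t, Q t}.
Proof.
move=> mN N0 HN; exists N; split => // t /= nQ.
by case: (pselect (N t)) => // nN; exfalso; apply: nQ; apply: HN.
Qed.

Lemma ed_deriv (R : realType) (f : R -> R) (t c : R) :
  (forall e, 0 < e -> exists2 d, 0 < d & forall r, `|r - t| < d ->
    `|f r - f t - c * (r - t)| <= e * `|r - t|) ->
  derivable f t 1 /\ derive1 f t = c.
Proof.
move=> H.
have HC : (fun h : R => h^-1 *: ((f \o shift t) (h *: 1) - f t)) @ 0^' --> c.
  apply/cvgrPdist_le => e e0.
  have [d d0 Hd] := H e e0.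
  rewrite /dnbhs /within /=; apply/nbhs_ballP; exists d => // h.
  rewrite -ball_normE /ball_ /= sub0r normrN => hh hne.
  have := Hd (h + t); rewrite addrK => /(_ hh).
  rewrite /shift /= -[h *: 1]/(h * 1) mulr1.
  have hp : 0 < `|h| by rewrite normr_gt0.
  move=> H1.
  have -> : c - h^-1 *: (f (h + t) - f t) = - ((f (h + t) - f t - c * h) / h).
    by rewrite /GRing.scale /=; field.
  by rewrite normrN normrM normfV ler_pdivrMr // mulrC.
split; first by apply/cvg_ex; exists c.
rewrite derive1E; exact: cvg_lim.
Qed.

Lemma char_lip (R : realType) (T M : R) (u : R -> R -> R) (x : R -> R) :
  (forall z t, 0 <= t <= T -> `|u z t| <= M) -> characteristic T u x ->
  forall s t, 0 <= s <= T -> 0 <= t <= T -> `|x s - x t| <= M * `|s - t|.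
Proof.
move=> hM [[L hL] hae].
have [N [mN N0 HN]] := @ae_get R _ hae.
have key : forall a b, 0 <= a -> a <= b -> b <= T -> `|x b - x a| <= M * (b - a).
  move=> a b ha hab hb.
  have hL' : forall s t, a <= s <= b -> a <= t <= b -> `|x s - x t| <= L * `|s - t|.
    move=> s t /andP[h1 h2] /andP[h3 h4]; apply: hL; apply/andP; split; lra.
  have hd : forall t, a <= t < b -> ~ N t -> derivable x t 1 /\ - M <= derive1 x t <= M.
    move=> t /andP[h1 h2] nN.
    have ht : 0 <= t <= T by apply/andP; split; lra.
    have [hdv ->] := HN t nN ht.
    by split => //; rewrite -ler_norml; apply: hM.
  have := @K_final R a b (-M) M L x N hab mN N0 hL' hd.
  by rewrite mulNr ler_norml.
move=> s t hs ht; case: (leP s t) => hst.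
  have -> : `|s - t| = t - s by rewrite distrC ger0_norm // subr_ge0.
  rewrite distrC; apply: key; lra.
have -> : `|s - t| = s - t by rewrite ger0_norm // subr_ge0 ltW.
apply: key; lra.
Qed.

Lemma window (R : realType) (T : R) (u : R -> R -> R) (x : R -> R) (y0 t0 c e rho a b : R) :
  characteristic T u x ->
  (forall z t, 0 <= t <= T -> `|z - y0| < rho -> `|t - t0| < rho -> `|u z t - c| < e) ->
  0 <= a -> a <= b -> b <= T ->
  (forall s, a <= s <= b -> `|x s - y0| < rho /\ `|s - t0| < rho) ->
  (c - e) * (b - a) <= x b - x a <= (c + e) * (b - a).
Proof.
move=> [[L hL] hae] hc ha hab hb hw.
have [N [mN N0 HN]] := @ae_get R _ hae.
have hL' : forall s t, a <= s <= b -> a <= t <= b -> `|x s - x t| <= L * `|s - t|.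
  move=> s t /andP[h1 h2] /andP[h3 h4]; apply: hL; apply/andP; split; lra.
apply: (@K_final R a b (c - e) (c + e) L x N hab mN N0 hL') => t /andP[h1 h2] nN.
have ht : 0 <= t <= T by apply/andP; split; lra.
have [hdv ->] := HN t nN ht.
split => //.
have [w1 w2] := hw t (ltac:(apply/andP; split; lra)).
have := hc (x t) t ht w1 w2; rewrite ltr_norml => /andP[k1 k2].
apply/andP; split; lra.
Qed.

Lemma sup_char (R : realType) (T M : R) (u : R -> R -> R) (A : Type) (xs : A -> R -> R) :
  0 < T -> (forall z t, 0 <= t <= T -> `|u z t| <= M) ->
  (forall x0 t0, 0 <= t0 <= T -> forall e, 0 < e -> exists2 d, 0 < d &
     forall x t, 0 <= t <= T -> `|x - x0| < d -> `|t - t0| < d -> `|u x t - u x0 t0| < e) ->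
  (forall a, characteristic T u (xs a)) ->
  (forall t, 0 <= t <= T -> has_sup (range (fun a => xs a t))) ->
  characteristic T u (fun t => sup (range (fun a => xs a t))).
Proof.
move=> T0 hM hc hch hs.
set y := fun t => sup (range (fun a => xs a t)).
have M0 : 0 <= M.
  apply: le_trans (hM 0 0 _); first exact: normr_ge0.
  by rewrite lexx ltW.
have lipx : forall a s t, 0 <= s <= T -> 0 <= t <= T -> `|xs a s - xs a t| <= M * `|s - t|.
  by move=> a; apply: char_lip hM (hch a).
have ub : forall a t, 0 <= t <= T -> xs a t <= y t.
  by move=> a t ht; apply: (sup_upper_bound (hs t ht)); exists a.
have apx : forall t eta, 0 <= t <= T -> 0 < eta -> exists a, y t - eta < xs a t.
  by move=> t eta ht e0; have [z [a _ <-] hz] := sup_adherent e0 (hs t ht); exists a.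
have ylip1 : forall s t, 0 <= s <= T -> 0 <= t <= T -> y s <= y t + M * `|s - t|.
  move=> s t hs' ht; apply: ge_sup; first by case: (hs s hs').
  move=> z [a _ <-].
  have := lipx a s t hs' ht; rewrite ler_norml => /andP[_ h].
  have := ub a t ht; lra.
have ylip : forall s t, 0 <= s <= T -> 0 <= t <= T -> `|y s - y t| <= M * `|s - t|.
  move=> s t hs' ht; rewrite ler_norml.
  have h1 := ylip1 s t hs' ht; have h2 := ylip1 t s ht hs'.
  rewrite distrC in h2; apply/andP; split; lra.
split; first by exists M.
have mN : measurable ([set 0] `|` [set T] : set R).
  by apply: measurableU; apply: measurable_set1.
apply: (@ae_mk R _ ([set 0] `|` [set T]) mN).
  apply/eqP; rewrite eq_le measure_ge0 andbT.
  have := measureU2 (@lebesgue_measure R) (measurable_set1 (0:R)) (measurable_set1 T).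
  move=> H; apply: le_trans H _.
  rewrite [X in (X + _ <= _)%E](_ : _ = 0%E); last exact: lebesgue_measure_set1.
  rewrite [X in (_ + X <= _)%E](_ : _ = 0%E); last exact: lebesgue_measure_set1.
  by rewrite adde0.
move=> t0 nN ht0.
have t0p : 0 < t0.
  rewrite lt_neqAle; case/andP: ht0 => -> _; rewrite andbT.
  by apply/negP => /eqP h; apply: nN; left; rewrite h.
have t0T : t0 < T.
  rewrite lt_neqAle; case/andP: ht0 => _ ->; rewrite andbT.
  by apply/negP => /eqP h; apply: nN; right; rewrite h.
set c := u (y t0) t0.
apply: ed_deriv => e e0.
have [rho rho0 hrho] := hc (y t0) t0 ht0 e e0.
have hc' : forall z t, 0 <= t <= T -> `|z - y t0| < rho -> `|t - t0| < rho -> `|u z t - c| < e.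
  by move=> z t ht h1 h2; apply: hrho.
have q0 : 0 < rho / (6 * M + 6) by rewrite divr_gt0 //; lra.
set d := Num.min (Num.min rho t0) (Num.min (T - t0) (rho / (6 * M + 6))).
have d0 : 0 < d by rewrite !lt_min rho0 t0p q0 subr_gt0 t0T.
exists d => // t ht.
set h := `|t - t0|.
have h0 : 0 <= h by exact: normr_ge0.
have hd : h < d by [].
have hrh : h < rho by move: hd; rewrite !lt_min => /andP[/andP[]]. 
have ht0' : h < t0 by move: hd; rewrite !lt_min => /andP[/andP[]]. 
have hT : h < T - t0 by move: hd; rewrite !lt_min => /andP[_ /andP[]]. 
have hq : h * (6 * M + 6) < rho.
  by rewrite -ltr_pdivlMr; [move: hd; rewrite !lt_min => /andP[_ /andP[]]|lra].
have hMh : 0 <= M * h by rewrite mulr_ge0.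
have htabs : t - t0 <= h by rewrite /h ler_norm.
have htabs2 : - (t - t0) <= h by rewrite /h -normrN ler_norm.
have ht1 : 0 <= t by lra.
have ht2 : t <= T by lra.
have htT : 0 <= t <= T by rewrite ht1 ht2.
apply/ler_addgt0Pr => eta' eta'0.
set eta := Num.min eta' (rho / 4).
have eta0 : 0 < eta by rewrite lt_min eta'0 divr_gt0.
have etale : eta <= eta' by rewrite ge_min lexx.
have etarho : eta <= rho / 4 by rewrite ge_min lexx orbT.
have win : forall a p q, 0 <= p -> p <= q -> q <= T -> p <= t0 <= q -> q - p <= h ->
    `|xs a t0 - y t0| <= 2 * (M * h) + eta ->
    (c - e) * (q - p) <= xs a q - xs a p <= (c + e) * (q - p).
  move=> a p q hp hpq hq' /andP[hp0 h0q] hqp hx0.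
  apply: (@window R T u (xs a) (y t0) t0 c e rho p q (hch a) hc' hp hpq hq') => s /andP[hs1 hs2].
  have hst : `|s - t0| <= h.
    rewrite ler_norml; apply/andP; split; lra.
  split; last by lra.
  have hs' : 0 <= s <= T by apply/andP; split; lra.
  have l1 := lipx a s t0 hs' ht0.
  have l2 : M * `|s - t0| <= M * h by rewrite ler_wpM2l.
  have l3 := ler_distD (xs a t0) (xs a s) (y t0).
  lra.
suff: `|y t - y t0 - c * (t - t0)| <= e * h + eta by lra.
rewrite ler_norml.
have [a ha] := apx t0 eta ht0 eta0.
have [b hb] := apx t eta htT eta0.
have ua0 := ub a t0 ht0.
have ub0 := ub b t0 ht0.
have uat := ub a t htT.
have ubt := ub b t htT.
have ya : `|xs a t0 - y t0| <= 2 * (M * h) + eta.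
  rewrite distrC ger0_norm ?subr_ge0 //; lra.
have lb := lipx b t t0 htT ht0; rewrite -/h ler_norml in lb.
have yl := ylip1 t0 t ht0 htT; rewrite distrC -/h in yl.
have yb : `|xs b t0 - y t0| <= 2 * (M * h) + eta.
  rewrite distrC ger0_norm ?subr_ge0 //.
  case/andP: lb => lb1 lb2; lra.
case: (leP t0 t) => htt.
  have eh : h = t - t0 by rewrite /h ger0_norm // subr_ge0.
  have ht0t : t0 <= t0 <= t by rewrite lexx htt.
  have hht : t - t0 <= h by rewrite eh.
  have wa := win a t0 t (ltW t0p) htt ht2 ht0t hht ya.
  have wb := win b t0 t (ltW t0p) htt ht2 ht0t hht yb.
  rewrite -eh in wa wb.
  case/andP: wa => wa1 wa2; case/andP: wb => wb1 wb2.
  rewrite -eh; apply/andP; split; lra.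
have eh : h = t0 - t by rewrite /h distrC ger0_norm // subr_ge0 ltW.
have ht0t : t <= t0 <= t0 by rewrite lexx (ltW htt).
have hht : t0 - t <= h by rewrite eh.
have wa := win a t t0 ht1 (ltW htt) (ltW t0T) ht0t hht ya.
have wb := win b t t0 ht1 (ltW htt) (ltW t0T) ht0t hht yb.
rewrite -eh in wa wb.
case/andP: wa => wa1 wa2; case/andP: wb => wb1 wb2.
have -> : c * (t - t0) = - (c * h) by rewrite eh; ring.
apply/andP; split; lra.
Qed.

Lemma deriv_neg (R : realType) (f : R -> R) (t : R) : derivable f t 1 ->
  derivable (fun x => - f x) t 1 /\ derive1 (fun x => - f x) t = - derive1 f t.
Proof.
move=> hd; apply: ed_deriv => e e0.
have [d d0 Hd] := @deriv_ed R f t hd e e0.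
exists d => // r hr.
have -> : - f r - - f t - - derive1 f t * (r - t) = - (f r - f t - derive1 f t * (r - t)) by ring.
by rewrite normrN; apply: Hd.
Qed.

Lemma char_neg (R : realType) (T : R) (u v : R -> R -> R) (x w : R -> R) :
  characteristic T u x -> (forall z t, v z t = - u (- z) t) -> (forall t, w t = - x t) ->
  characteristic T v w.
Proof.
move=> [[L hL] hae] hv hw; split.
  exists L => s t hs ht; rewrite !hw -opprD normrN; exact: hL.
have [N [mN N0 HN]] := @ae_get R _ hae.
apply: (@ae_mk R _ N mN N0) => t nN ht.
have [hd hde] := HN t nN ht.
have -> : w = (fun x0 => - x x0) by apply: funext.
have [hd' hde'] := @deriv_neg R x t hd.
by split => //; rewrite hde' hde hv opprK.
Qed.

Theorem lemma3p3 (R : realType) (T : R) (u : R -> R -> R)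
  (A : Type) (xs : A -> R -> R) :
  0 < T ->
  (exists M : R, forall x t, 0 <= t <= T -> `|u x t| <= M) ->
  HS_weak_solution T u ->
  (forall a, characteristic T u (xs a)) ->
  ((forall t, 0 <= t <= T -> has_sup (range (fun a => xs a t))) ->
     characteristic T u (fun t => sup (range (fun a => xs a t)))) /\
  ((forall t, 0 <= t <= T -> has_inf (range (fun a => xs a t))) ->
     characteristic T u (fun t => inf (range (fun a => xs a t)))).
Proof.
move=> T0 [M hM] [hcont _] hch.
have hc := @cont_ed R T u hcont.
split => hs.
  exact: (@sup_char R T M u A xs T0 hM hc hch hs).
pose u' := fun z t => - u (- z) t.
pose xs' := fun a t => - xs a t.
have hM' : forall z t, 0 <= t <= T -> `|u' z t| <= M.
  by move=> z t ht; rewrite /u' normrN; apply: hM.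
have hc' : forall x0 t0, 0 <= t0 <= T -> forall e, 0 < e -> exists2 d, 0 < d &
     forall x t, 0 <= t <= T -> `|x - x0| < d -> `|t - t0| < d -> `|u' x t - u' x0 t0| < e.
  move=> x0 t0 ht0 e e0.
  have [d d0 Hd] := hc (- x0) t0 ht0 e e0.
  exists d => // x t ht hx htt.
  rewrite /u' -opprD normrN; apply: Hd => //.
  by rewrite -opprD normrN.
have hch' : forall a, characteristic T u' (xs' a).
  by move=> a; apply: (@char_neg R T u u' (xs a) (xs' a) (hch a)).
have Erange : forall t, range (fun a => xs' a t) = -%R @` range (fun a => xs a t).
  move=> t; apply/seteqP; split => z.
    by move=> [a _ <-]; exists (xs a t) => //; exists a.
  by move=> [w [a _ <-] <-]; exists a.
have hs' : forall t, 0 <= t <= T -> has_sup (range (fun a => xs' a t)).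
  by move=> t ht; rewrite Erange; apply/has_inf_supN; apply: hs.
have := @sup_char R T M u' A xs' T0 hM' hc' hch' hs'.
move/char_neg; apply.
  by move=> z t; rewrite /u' !opprK.
by move=> t; rewrite /inf Erange.
Qed.
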